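(* Let $[a,b]\subset[0,1]$, $c\in(0,1]$, $K=\{u\in\mathcal C([0,1]): u\ge 0,\ \min_{t\in[a,b]}u(t)\ge c\|u\|\}$ with the supremum norm $\|\cdot\|$. Assume: (H1) $f:[0,1]\times[0,\infty)\to[0,\infty)$ is such that $f(\cdot,u(\cdot))$ is measurable whenever $u\in\mathcal C([0,1])$, and for each $r>0$ there is $R>0$ with $f(t,u)\le R$ for a.a. $t\in[0,1]$ and all $u\in[0,r]$; (H2) $g$ is measurable and $g\ge 0$ a.e.; (H3) $k:[0,1]\times[0,1]\to[0,\infty)$ is continuous; (H4) there is a measurable $\Phi:[0,1]\to[0,\infty)$ with $\Phi g\in L^1(0,1)$, $\int_a^b\Phi g>0$, $k(t,s)\le\Phi(s)$ for all $t,s\in[0,1]$ and $c\Phi(s)\le k(t,s)$ for $t\in[a,b]$, $s\in[0,1]$. Let $T:K\to K$, $Tu(t)=\int_0^1k(t,s)g(s)f(s,u(s))\,ds$, and let $\mathbb T$ be its closed--convex envelope. Suppose that $\{u\}\cap\mathbb{T}u\subset\{Tu\}$ for all $u\in K\cap\mathbb{T}K$, and that there exist $\rho>0$ and $\varepsilon>0$ such that $f^{\rho,\varepsilon}<m$, where $$f^{\rho,\varepsilon}:=\sup_{0\le t\le1,\,0\le u\le\rho+\varepsilon}\frac{f(t,u)}{\rho},\qquad \frac1m:=\sup_{t\in[0,1]}\int_0^1k(t,s)g(s)\,ds.$$ Then $\lambda u\notin\mathbb{T}u$ for all $u\in K$ with $\|u\|=\rho$ and all $\lambda\ge1$.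
   Context: The closed--convex envelope of $T:K\to K$ is the multivalued map $\mathbb{T}u=\bigcap_{\varepsilon>0}\overline{\mathrm{co}}\,T\big(\overline B_\varepsilon(u)\cap K\big)$, where $\overline B_\varepsilon(u)$ is the closed ball in $\mathcal C([0,1])$ and $\overline{\mathrm{co}}$ is closed convex hull; $\mathbb TK=\bigcup_{u\in K}\mathbb Tu$. *)

(* Defs.v *)
From HB Require Import structures.
From mathcomp Require Import all_boot all_order all_algebra.
From mathcomp Require Import all_classical all_reals all_analysis.
Set Implicit Arguments. Unset Strict Implicit. Unset Printing Implicit Defensive.
Import Order.TTheory GRing.Theory Num.Theory.
Import numFieldNormedType.Exports.
Local Open Scope classical_set_scope.
Local Open Scope ring_scope.

(* Elements of C([0,1]) are represented by functions R -> R that are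
   continuous on [0,1]; only their values on [0,1] matter (all notions
   below depend only on these values). *)
Section Defs.
Variable R : realType.

Definition C01 (u : R -> R) : Prop := {within `[0, 1], continuous u}.

Definition supn (u : R -> R) : R := sup [set `|u t| | t in `[0, 1]].

Definition coneK (a b c : R) (u : R -> R) : Prop :=
  C01 u /\ (forall t, 0 <= t <= 1 -> 0 <= u t) /\
  (forall t, a <= t <= b -> c * supn u <= u t).

Definition clco (A : set (R -> R)) (v : R -> R) : Prop :=
  C01 v /\
  forall d : R, 0 < d -> exists (n : nat) (l : 'I_n -> R) (x : 'I_n -> R -> R),
    [/\ (forall i, 0 <= l i), \sum_(i < n) l i = 1, (forall i, A (x i)) &
        forall t, 0 <= t <= 1 -> `|v t - \sum_(i < n) l i * x i t| <= d].

(* closed-convex envelope of T : K -> K :  v \in TT u *)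
Definition envelope (K : set (R -> R)) (T : (R -> R) -> (R -> R))
    (u v : R -> R) : Prop :=
  forall e : R, 0 < e ->
    clco [set T w | w in [set w | K w /\ supn (fun t => w t - u t) <= e]] v.

Definition Top (k : R -> R -> R) (g : R -> R) (f : R -> R -> R)
    (u : R -> R) : R -> R :=
  fun t => Rintegral (@lebesgue_measure R) `[0, 1]
             (fun s => k t s * g s * f s (u s)).

Definition fsup (f : R -> R -> R) (rho eps : R) : \bar R :=
  ereal_sup [set x | exists t u : R, [/\ 0 <= t <= 1, 0 <= u <= rho + eps &
                                   x = (f t u / rho)%:E]].

Definition inv_m (k : R -> R -> R) (g : R -> R) : \bar R :=
  ereal_sup [set x | exists t : R, 0 <= t <= 1 /\
     x = (\int[@lebesgue_measure R]_(s in `[0%R, 1%R]) (k t s * g s)%:E)%E].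

Definition mconst (k : R -> R -> R) (g : R -> R) : R := (fine (inv_m k g))^-1.

End Defs.

(* Main.v *)
Require Import Defs.
From HB Require Import structures.
From mathcomp Require Import all_boot all_order all_algebra.
From mathcomp Require Import all_classical all_reals all_analysis.
From mathcomp Require Import measurable_realfun.
From mathcomp Require Import lra.
Import Order.TTheory GRing.Theory Num.Theory.
Import numFieldNormedType.Exports.
Local Open Scope classical_set_scope.
Local Open Scope ring_scope.

Lemma k_meas (R : realType) (k : R -> R -> R) t :
  {within `[0, 1] `*` `[0, 1], continuous (fun p : R * R => k p.1 p.2)} ->
  0 <= t <= 1 -> measurable_fun (`[0, 1] : set R) (k t).
Proof.
move=> /continuous_subspace_prodP kc t01.
apply: subspace_continuous_measurable_fun => //.
rewrite continuous_subspace_in => s /set_mem s01.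
have h1 : {for s, continuous (fun s' : subspace (`[0, 1] : set R) =>
   ((t : subspace (`[0, 1] : set R)), s') : subspace (`[0,1] : set R) * subspace (`[0,1] : set R))}.
  by apply: cvg_pair => //; apply: cvg_cst.
have h2 := kc (t, s).
have h3 := h2 (mem_set (conj t01 s01 : (`[0, 1] `*` `[0, 1]) (t, s))).
exact: (cvg_comp _ _ h1 h3).
Qed.
Lemma T_bound (R : realType) (k : R -> R -> R) (g : R -> R) (f : R -> R -> R)
   (w : R -> R) (t P M : R) :
  (forall u : R -> R, C01 u -> (forall t, 0 <= t <= 1 -> 0 <= u t) ->
     measurable_fun (`[0, 1] : set R) (fun t => f t (u t))) ->
  (forall t u, 0 <= t <= 1 -> 0 <= u -> 0 <= f t u) ->
  measurable_fun (`[0, 1] : set R) g ->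
  {ae @lebesgue_measure R, forall t, 0 <= t <= 1 -> 0 <= g t} ->
  (forall t s, 0 <= t <= 1 -> 0 <= s <= 1 -> 0 <= k t s) ->
  measurable_fun (`[0, 1] : set R) (k t) ->
  C01 w -> (forall s, 0 <= s <= 1 -> 0 <= w s) ->
  0 <= P -> 0 <= M -> 0 <= t <= 1 ->
  (forall s, 0 <= s <= 1 -> f s (w s) <= P) ->
  (\int[@lebesgue_measure R]_(s in `[0%R, 1%R]) (k t s * g s)%:E <= M%:E)%E ->
  Top k g f w t <= P * M.
Proof.
move=> fm f0 gm g0 k0 km wc w0 P0 M0 t01 fP kgM.
rewrite /Top /Rintegral.
pose D := (`[0, 1]%classic : set R).
have mD : measurable D by exact: measurable_itv.
pose g' := fun s => Num.max (g s) 0.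
have g'm : measurable_fun D g'.
  by apply: measurable_maxr => //; exact: measurable_cst.
have fwm := fm w wc w0.
have hm : measurable_fun D (fun s => (k t s * g s * f s (w s))%:E).
  by apply/measurable_EFinP; apply: measurable_funM => //; apply: measurable_funM.
have h'm : measurable_fun D (fun s => (k t s * g' s * f s (w s))%:E).
  by apply/measurable_EFinP; apply: measurable_funM => //; apply: measurable_funM.
have kgm : measurable_fun D (fun s => (k t s * g s)%:E).
  by apply/measurable_EFinP; apply: measurable_funM.
have kg'm : measurable_fun D (fun s => (k t s * g' s)%:E).
  by apply/measurable_EFinP; apply: measurable_funM.
have gg' : forall s, D s -> 0 <= g s -> g' s = g s.
  by move=> s _ gs; rewrite /g' max_l.
have g'0 : forall s, 0 <= g' s by move=> s; rewrite /g' le_max lexx orbT.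
have e1 : (\int[@lebesgue_measure R]_(s in D) (k t s * g s * f s (w s))%:E =
           \int[@lebesgue_measure R]_(s in D) (k t s * g' s * f s (w s))%:E)%E.
  apply: ae_eq_integral => //; rewrite /ae_eq; case: g0 => N [mN muN HN].
  exists N; split => // s /= Hs; apply: HN => /= Hg; apply: Hs => Ds.
  have s01 : 0 <= s <= 1 by move: Ds; rewrite /D /= in_itv.
  by rewrite gg' // Hg.
have e2 : (\int[@lebesgue_measure R]_(s in D) (k t s * g s)%:E =
           \int[@lebesgue_measure R]_(s in D) (k t s * g' s)%:E)%E.
  apply: ae_eq_integral => //; rewrite /ae_eq; case: g0 => N [mN muN HN].
  exists N; split => // s /= Hs; apply: HN => /= Hg; apply: Hs => Ds.
  have s01 : 0 <= s <= 1 by move: Ds; rewrite /D /= in_itv.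
  by rewrite gg' // Hg.
have le1 : (\int[@lebesgue_measure R]_(s in D) (k t s * g' s * f s (w s))%:E <=
            \int[@lebesgue_measure R]_(s in D) (P%:E * (k t s * g' s)%:E))%E.
  apply: ge0_le_integral => //.
  - move=> s Ds; have s01 : 0 <= s <= 1 by move: Ds; rewrite /D /= in_itv.
    by rewrite lee_fin; apply: mulr_ge0; [apply: mulr_ge0 => //; exact: k0|
      apply: f0 => //; exact: w0].
  - by apply: emeasurable_funM => //; exact: measurable_cst.
  - move=> s Ds; have s01 : 0 <= s <= 1 by move: Ds; rewrite /D /= in_itv.
    rewrite -EFinM lee_fin mulrC; apply: ler_wpM2r; last exact: fP.
    by apply: mulr_ge0 => //; exact: k0.
rewrite ge0_integralZl_EFin // in le1; last first.
  move=> s Ds; have s01 : 0 <= s <= 1 by move: Ds; rewrite /D /= in_itv.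
  by rewrite lee_fin; apply: mulr_ge0 => //; exact: k0.
rewrite -e2 -e1 in le1.
have le2 : (\int[@lebesgue_measure R]_(s in D) (k t s * g s * f s (w s))%:E <= (P * M)%:E)%E.
  apply: le_trans le1 _; rewrite EFinM; exact: lee_wpmul2l.
move: le2; case: (\int[@lebesgue_measure R]_(s in D) _)%E => [r| |] //=.
by move=> _; apply: mulr_ge0.
Qed.

Lemma supn_ge (R : realType) (u : R -> R) s : supn u <> 0 -> 0 <= s <= 1 -> `|u s| <= supn u.
Proof.
move=> hn s01; have [hs|nhs] := pselect (has_sup [set `|u t| | t in (`[0, 1]%classic : set R)]).
  by apply: sup_upper_bound => //; exists s => //=; rewrite in_itv.
by exfalso; apply: hn; rewrite /supn sup_out.
Qed.

Lemma supn_ge_bnd (R : realType) (u : R -> R) s B :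
  (forall t, 0 <= t <= 1 -> `|u t| <= B) -> 0 <= s <= 1 -> `|u s| <= supn u.
Proof.
move=> hB s01; apply: sup_upper_bound; last by exists s => //=; rewrite in_itv.
split; first by exists `|u 0|, 0 => //=; rewrite in_itv /= lexx ler01.
by exists B => _ [t /= t01 <-]; apply: hB; move: t01; rewrite in_itv.
Qed.

Theorem lemma2 (R : realType) (a b c rho eps : R)
  (f : R -> R -> R) (g Phi : R -> R) (k : R -> R -> R) :
  0 <= a -> a <= b -> b <= 1 -> 0 < c -> c <= 1 ->
  (* (H1) *)
  (forall t u, 0 <= t <= 1 -> 0 <= u -> 0 <= f t u) ->
  (forall u : R -> R, C01 u -> (forall t, 0 <= t <= 1 -> 0 <= u t) ->
     measurable_fun (`[0, 1] : set R) (fun t => f t (u t))) ->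
  (forall r : R, 0 < r -> exists Rb : R, 0 < Rb /\
     {ae @lebesgue_measure R, forall t, 0 <= t <= 1 ->
        forall u, 0 <= u <= r -> f t u <= Rb}) ->
  (* (H2) *)
  measurable_fun (`[0, 1] : set R) g ->
  {ae @lebesgue_measure R, forall t, 0 <= t <= 1 -> 0 <= g t} ->
  (* (H3) *)
  (forall t s, 0 <= t <= 1 -> 0 <= s <= 1 -> 0 <= k t s) ->
  {within `[0, 1] `*` `[0, 1], continuous (fun p : R * R => k p.1 p.2)} ->
  (* (H4) *)
  measurable_fun (`[0, 1] : set R) Phi ->
  (forall s, 0 <= s <= 1 -> 0 <= Phi s) ->
  (@lebesgue_measure R).-integrable `[0, 1] (fun s => (Phi s * g s)%:E) ->
  (0 < \int[@lebesgue_measure R]_(s in `[a, b]) (Phi s * g s)%:E)%E ->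
  (forall t s, 0 <= t <= 1 -> 0 <= s <= 1 -> k t s <= Phi s) ->
  (forall t s, a <= t <= b -> 0 <= s <= 1 -> c * Phi s <= k t s) ->
  (* {u} cap TT u subset {T u} for all u in K cap TT K *)
  (forall u : R -> R, coneK a b c u ->
     (exists w, coneK a b c w /\ envelope (coneK a b c) (Top k g f) w u) ->
     envelope (coneK a b c) (Top k g f) u u ->
     forall t, 0 <= t <= 1 -> u t = Top k g f u t) ->
  0 < rho -> 0 < eps ->
  (fsup f rho eps < (mconst k g)%:E)%E ->
  forall u : R -> R, coneK a b c u -> supn u = rho ->
  forall lam : R, 1 <= lam ->
    ~ envelope (coneK a b c) (Top k g f) u (fun t => lam * u t).
Proof.
move=> a0 ab b1 c0 c1 f0 fm fbnd gm g0 k0 kc Phim Phi0 Phii Phiab kPhi cPhik fix_h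
  rho0 eps0 fsupm u uK supu lam lam1 Henv.
case: uK => uc [u0 uc'].
set Fs := fsup f rho eps.
have Fs0 : (0 <= Fs)%E.
  apply: (le_trans _ (ereal_sup_ubound _)); last first.
    exists 0, 0; split; [by rewrite lexx ler01| |reflexivity].
    by rewrite lexx /=; apply: addr_ge0; apply: ltW.
  by rewrite lee_fin; apply: divr_ge0; [apply: f0; rewrite ?lexx ?ler01|apply: ltW].
have [F FsE] : exists F, Fs = F%:E.
  move: fsupm Fs0; rewrite -/Fs; case: Fs => [r| |] //; by exists r.
have F0 : 0 <= F by move: Fs0; rewrite FsE lee_fin.
set Mi := fine (inv_m k g).
have FMi : F < Mi^-1 by move: fsupm; rewrite -/Fs FsE lte_fin.
have Mi0 : 0 < Mi by rewrite -invr_gt0; apply: le_lt_trans FMi.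
have invmE : inv_m k g = Mi%:E.
  move: Mi0; rewrite /Mi; case: (inv_m k g) => [r| |] //=; by rewrite ltxx.
have FM1 : F * Mi < 1.
  by rewrite -(mulVf (lt0r_neq0 Mi0)); rewrite ltr_pM2r.
set B := rho * F * Mi.
have Brho : B < rho by rewrite /B -mulrA -[ltRHS]mulr1 ltr_pM2l.
have rhon0 : supn u <> 0 by rewrite supu; apply/eqP; rewrite gt_eqF.
have ule : forall s, 0 <= s <= 1 -> u s <= rho.
  by move=> s s01; apply: le_trans (ler_norm (u s)) _; rewrite -supu; exact: supn_ge.
have key : forall w, coneK a b c w -> supn (fun t => w t - u t) <= eps ->
    forall t, 0 <= t <= 1 -> Top k g f w t <= B.
  move=> w [wc [w0 _]] wu t t01.
  have [cm cmin cmax] := EVT_max ler01 wc.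
  have wd : forall s, 0 <= s <= 1 -> w s <= rho + eps.
    move=> s s01.
    have h := @supn_ge_bnd R (fun t => w t - u t) s (w cm + rho).
    have h2 : `|w s - u s| <= eps.
      apply: le_trans wu; apply: h => // t' t'01.
      have := cmax t'; rewrite in_itv /= => /(_ t'01) wt.
      have := w0 _ t'01; have := u0 _ t'01; have := ule _ t'01.
      rewrite ler_norml => *; apply/andP; split; lra.
    move: h2; rewrite ler_norml => /andP[_ h3]; have := ule _ s01; lra.
  rewrite /B.
  apply: (@T_bound R k g f w t (rho * F) Mi fm f0 gm g0 k0 (@k_meas R k t kc t01) wc w0) => //.
  - by apply: mulr_ge0 => //; apply: ltW.
  - by apply: ltW.
  - move=> s s01.
    have : ((f s (w s) / rho)%:E <= Fs)%E.
      apply: ereal_sup_ubound; exists s, (w s); split => //.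
      by rewrite w0 // wd.
    by rewrite FsE lee_fin ler_pdivrMr // mulrC.
  - rewrite -invmE; apply: ereal_sup_ubound; exists t; split => //.
have [_ Hcl] := Henv eps eps0.
have d0 : 0 < (rho - B) / 2 by apply: divr_gt0 => //; rewrite subr_gt0.
have [n [l [x [l0 l1 xA xd]]]] := Hcl _ d0.
have ub : forall t, 0 <= t <= 1 -> `|u t| <= B + (rho - B) / 2.
  move=> t t01.
  have hs : \sum_(i < n) l i * x i t <= B.
    apply: (@le_trans _ _ (\sum_(i < n) l i * B)).
      apply: ler_sum => i _; apply: ler_wpM2l => //.
      have [w [wK wu] <-] := xA i; exact: key.
    by rewrite -mulr_suml l1 mul1r.
  have := xd t t01; rewrite ler_norml => /andP[_ h1].
  have ut0 := u0 t t01.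
  have : u t <= lam * u t by rewrite -[leLHS]mul1r ler_wpM2r.
  rewrite ger0_norm //; lra.
have : supn u <= B + (rho - B) / 2.
  apply: ge_sup; first by exists `|u 0|, 0 => //=; rewrite in_itv /= lexx ler01.
  by move=> _ [t /= t01 <-]; apply: ub; move: t01; rewrite in_itv.
rewrite supu; lra.
Qed.
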